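(* Let $(A,\cdot)$ be a finite-dimensional associative algebra and $r\in A\otimes A$ antisymmetric satisfying $r_{12}r_{13}+r_{13}r_{23}-r_{23}r_{12}=0$. Let $D_r$ be the vector space $A\oplus A^*$ with the product $x*y=x\cdot y$, $a^**b^*=R^*(r(a^* ))b^*+L^*(r(b^* ))a^*$, $x*a^*=x\cdot r(a^* )-r(R^*(x)a^* )+R^*(x)a^*$, $a^**x=r(a^* )\cdot x-r(L^*(x)a^* )+L^*(x)a^*$ ($x,y\in A$, $a^*,b^*\in A^*$), and let $A\ltimes_{R^*,L^*}A^*$ be $A\oplus A^*$ with product $(x+a^* )(y+b^* )=x\cdot y+R^*(x)b^*+L^*(y)a^*$. Let $\mathcal B(x+a^*,y+b^* )=\langle x,b^*\rangle+\langle a^*,y\rangle$. Then $D_r$ and $A\ltimes_{R^*,L^*}A^*$ are associative algebras, $\mathcal B$ is invariant on both, and there is an isomorphism of associative algebras $\varphi:A\ltimes_{R^*,L^*}A^*\to D_r$ with $\mathcal B(\varphi(u),\varphi(v))=\mathcal B(u,v)$ for all $u,v$ (i.e. they are isomorphic as Frobenius algebras).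
   Context: $L(x)y=x\cdot y$, $R(x)y=y\cdot x$; $\langle L^*(x)a^*,y\rangle=\langle a^*,x\cdot y\rangle$, $\langle R^*(x)a^*,y\rangle=\langle a^*,y\cdot x\rangle$. Antisymmetric means $\sigma(r)=-r$ with $\sigma(x\otimes y)=y\otimes x$. For $r=\sum_i x_i\otimes y_i$: $r_{12}r_{13}=\sum_{i,j}x_i\cdot x_j\otimes y_i\otimes y_j$, $r_{13}r_{23}=\sum_{i,j}x_i\otimes x_j\otimes y_i\cdot y_j$, $r_{23}r_{12}=\sum_{i,j}x_j\otimes x_i\cdot y_j\otimes y_i$. $r$ is regarded as a map $A^*\to A$ by $\langle u^*\otimes v^*,r\rangle=\langle u^*,r(v^* )\rangle$. A bilinear form $\mathcal B$ on an associative algebra is invariant if $\mathcal B(uv,w)=\mathcal B(u,vw)$. *)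

(* Defs.v *)
From HB Require Import structures.
From mathcomp Require Import all_boot all_order all_algebra.
Set Implicit Arguments. Unset Strict Implicit. Unset Printing Implicit Defensive.
Import GRing.Theory.
Local Open Scope ring_scope.

(* A finite-dimensional algebra A over a field K is modelled as K^n = 'rV[K]_n
   with a product [mul] (bilinearity and associativity are hypotheses of the
   theorem).  The dual space A^dual is identified with 'rV[K]_n through the
   standard pairing [pair], i.e. via the dual basis of the standard basis. *)

Section Defs.
Variables (K : fieldType) (n : nat).
Local Notation V := 'rV[K]_n.

Definition ebas (i : 'I_n) : V := delta_mx 0 i.

Definition pair (a x : V) : K := \sum_(i < n) a 0 i * x 0 i.

Variable mul : V -> V -> V.

Definition is_bilinear : Prop :=
  (forall (c : K) (x y z : V), mul (c *: x + y) z = c *: mul x z + mul y z) /\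
  (forall (c : K) (x y z : V), mul z (c *: x + y) = c *: mul z x + mul z y).

Definition is_assoc : Prop := forall x y z : V, mul (mul x y) z = mul x (mul y z).

(* <L^dual(x) a^dual, y> = <a^dual, x.y>  and  <R^dual(x) a^dual, y> = <a^dual, y.x> *)
Definition Lst (x a : V) : V := \row_(j < n) pair a (mul x (ebas j)).
Definition Rst (x a : V) : V := \row_(j < n) pair a (mul (ebas j) x).

(* r = \sum_{i,j} r i j e_i (x) e_j is a matrix; antisymmetry sigma(r) = -r *)
Definition antisym (r : 'M[K]_n) : Prop := trmx r = - r.

(* r as a map A^dual -> A:  <u^dual (x) v^dual, r> = <u^dual, r(v^dual)> *)
Definition rmap (r : 'M[K]_n) (v : V) : V := \row_(i < n) \sum_(j < n) r i j * v 0 j.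

(* Coordinates (p,q,s) of r12 r13, r13 r23, r23 r12 in A (x) A (x) A,
   for r = \sum_{i,j} r i j e_i (x) e_j. *)
Definition r12r13 (r : 'M[K]_n) (p q s : 'I_n) : K :=
  \sum_(i < n) \sum_(k < n) r i q * r k s * (mul (ebas i) (ebas k)) 0 p.
Definition r13r23 (r : 'M[K]_n) (p q s : 'I_n) : K :=
  \sum_(j < n) \sum_(l < n) r p j * r q l * (mul (ebas j) (ebas l)) 0 s.
Definition r23r12 (r : 'M[K]_n) (p q s : 'I_n) : K :=
  \sum_(i < n) \sum_(l < n) r i s * r p l * (mul (ebas i) (ebas l)) 0 q.

Definition AYBE (r : 'M[K]_n) : Prop :=
  forall p q s : 'I_n, r12r13 r p q s + r13r23 r p q s - r23r12 r p q s = 0.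

Definition DS := (V * V)%type.

Definition dsadd (u v : DS) : DS := (u.1 + v.1, u.2 + v.2).
Definition dsscale (c : K) (u : DS) : DS := (c *: u.1, c *: u.2).

Definition semidirect_mul (u v : DS) : DS :=
  (mul u.1 v.1, Rst u.1 v.2 + Lst v.1 u.2).

(* product of D_r, extended bilinearly from the four given formulas *)
Definition Dr_mul (r : 'M[K]_n) (u v : DS) : DS :=
  let x := u.1 in let a := u.2 in let y := v.1 in let b := v.2 in
  (mul x y
     + (mul x (rmap r b) - rmap r (Rst x b))
     + (mul (rmap r a) y - rmap r (Lst y a)),
   Rst x b + Lst y a + (Rst (rmap r a) b + Lst (rmap r b) a)).

Definition Bform (u v : DS) : K := pair v.2 u.1 + pair u.2 v.1.

Definition ds_assoc (m : DS -> DS -> DS) : Prop :=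
  forall u v w, m (m u v) w = m u (m v w).

Definition ds_invariant (m : DS -> DS -> DS) : Prop :=
  forall u v w, Bform (m u v) w = Bform u (m v w).

End Defs.

(* Main.v *)
Require Import Defs.
From HB Require Import structures.
From mathcomp Require Import all_boot all_order all_algebra.
Set Implicit Arguments. Unset Strict Implicit. Unset Printing Implicit Defensive.
Import GRing.Theory.
Local Open Scope ring_scope.

Lemma ebas_sum (K : fieldType) (n : nat) (u : 'rV[K]_n) :
  u = \sum_(j < n) u 0 j *: ebas K j.
Proof. exact: row_sum_delta. Qed.

Lemma ebasE (K : fieldType) (n : nat) (j k : 'I_n) :
  (ebas K j) 0 k = (j == k)%:R.
Proof. by rewrite /ebas mxE eqxx /= eq_sym. Qed.

Lemma pairDl (K : fieldType) (n : nat) (a b x : 'rV[K]_n) :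
  pair (a + b) x = pair a x + pair b x.
Proof. by rewrite /pair -big_split; apply: eq_bigr => i _; rewrite mxE mulrDl. Qed.
Lemma pairDr (K : fieldType) (n : nat) (a x y : 'rV[K]_n) :
  pair a (x + y) = pair a x + pair a y.
Proof. by rewrite /pair -big_split; apply: eq_bigr => i _; rewrite mxE mulrDr. Qed.
Lemma pairNl (K : fieldType) (n : nat) (a x : 'rV[K]_n) :
  pair (- a) x = - pair a x.
Proof. by rewrite /pair -sumrN; apply: eq_bigr => i _; rewrite mxE mulNr. Qed.
Lemma pairNr (K : fieldType) (n : nat) (a x : 'rV[K]_n) :
  pair a (- x) = - pair a x.
Proof. by rewrite /pair -sumrN; apply: eq_bigr => i _; rewrite mxE mulrN. Qed.
Lemma pairZl (K : fieldType) (n : nat) c (a x : 'rV[K]_n) :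
  pair (c *: a) x = c * pair a x.
Proof. by rewrite /pair mulr_sumr; apply: eq_bigr => i _; rewrite mxE mulrA. Qed.
Lemma pairZr (K : fieldType) (n : nat) c (a x : 'rV[K]_n) :
  pair a (c *: x) = c * pair a x.
Proof. by rewrite /pair mulr_sumr; apply: eq_bigr => i _; rewrite mxE mulrCA. Qed.
Lemma pair_sumr (K : fieldType) (n : nat) (a : 'rV[K]_n) (F : 'I_n -> 'rV[K]_n) :
  pair a (\sum_(j < n) F j) = \sum_(j < n) pair a (F j).
Proof.
apply: (big_ind2 (fun x y => pair a x = y)) => //.
  by rewrite /pair big1 // => i _; rewrite mxE mulr0.
by move=> x1 y1 x2 y2 <- <-; rewrite pairDr.
Qed.
Lemma pair_ebasr (K : fieldType) (n : nat) (a : 'rV[K]_n) j :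
  pair a (ebas K j) = a 0 j.
Proof.
rewrite /pair (bigD1 j) //= ebasE eqxx mulr1 big1 ?addr0 // => i /negPf ne.
by rewrite ebasE eq_sym ne mulr0.
Qed.
Lemma pair_ext (K : fieldType) (n : nat) (u v : 'rV[K]_n) :
  (forall w, pair u w = pair v w) -> u = v.
Proof. by move=> H; apply/rowP => j; rewrite -!pair_ebasr H. Qed.

Lemma mmulDl (K : fieldType) (n : nat) (mul : 'rV[K]_n -> 'rV[K]_n -> 'rV[K]_n) :
  is_bilinear mul -> forall x y z, mul (x + y) z = mul x z + mul y z.
Proof. by move=> [H1 _] x y z; rewrite -{1}(scale1r x) H1 scale1r. Qed.
Lemma mmulDr (K : fieldType) (n : nat) (mul : 'rV[K]_n -> 'rV[K]_n -> 'rV[K]_n) :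
  is_bilinear mul -> forall x y z, mul z (x + y) = mul z x + mul z y.
Proof. by move=> [_ H1] x y z; rewrite -{1}(scale1r x) H1 scale1r. Qed.
Lemma mmulZl (K : fieldType) (n : nat) (mul : 'rV[K]_n -> 'rV[K]_n -> 'rV[K]_n) :
  is_bilinear mul -> forall c x z, mul (c *: x) z = c *: mul x z.
Proof.
move=> hb c x z; have := proj1 hb c x 0 z; rewrite addr0 => ->.
have h0 : mul 0 z = 0.
  by apply: (addrI (mul 0 z)); rewrite addr0 -mmulDl // addr0.
by rewrite h0 addr0.
Qed.

Section S.
Variables (K : fieldType) (n : nat) (mul : 'rV[K]_n -> 'rV[K]_n -> 'rV[K]_n).
Hypothesis hb : is_bilinear mul.

Lemma mmul0l z : mul 0 z = 0.
Proof. by apply: (addrI (mul 0 z)); rewrite addr0 -mmulDl // addr0. Qed.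
Lemma mmul0r z : mul z 0 = 0.
Proof. by apply: (addrI (mul z 0)); rewrite addr0 -mmulDr // addr0. Qed.
Lemma mmulZr c x z : mul z (c *: x) = c *: mul z x.
Proof. by have := proj2 hb c x 0 z; rewrite addr0 => ->; rewrite mmul0r addr0. Qed.
Lemma mmulNl x z : mul (- x) z = - mul x z.
Proof. by rewrite -scaleN1r mmulZl // scaleN1r. Qed.
Lemma mmulNr x z : mul z (- x) = - mul z x.
Proof. by rewrite -scaleN1r mmulZr scaleN1r. Qed.
Lemma mmulBl x y z : mul (x - y) z = mul x z - mul y z.
Proof. by rewrite mmulDl // mmulNl. Qed.
Lemma mmulBr x y z : mul z (x - y) = mul z x - mul z y.
Proof. by rewrite mmulDr // mmulNr. Qed.
Lemma mmul_sumr z (F : 'I_n -> 'rV[K]_n) :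
  mul z (\sum_(j < n) F j) = \sum_(j < n) mul z (F j).
Proof.
apply: (big_ind2 (fun x y => mul z x = y)) => //; first exact: mmul0r.
by move=> x1 y1 x2 y2 <- <-; rewrite mmulDr.
Qed.
Lemma mmul_suml z (F : 'I_n -> 'rV[K]_n) :
  mul (\sum_(j < n) F j) z = \sum_(j < n) mul (F j) z.
Proof.
apply: (big_ind2 (fun x y => mul x z = y)) => //; first exact: mmul0l.
by move=> x1 y1 x2 y2 <- <-; rewrite mmulDl.
Qed.

Lemma sum_coord (F : 'I_n -> 'rV[K]_n) p :
  (\sum_(j < n) F j) 0 p = \sum_(j < n) F j 0 p.
Proof. by rewrite summxE. Qed.

Lemma mmulEr z y p :
  (mul z y) 0 p = \sum_(k < n) y 0 k * (mul z (ebas K k)) 0 p.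
Proof.
rewrite {1}(ebas_sum y) mmul_sumr summxE; apply: eq_bigr => k _.
by rewrite mmulZr mxE.
Qed.
Lemma mmulEl z y p :
  (mul y z) 0 p = \sum_(k < n) y 0 k * (mul (ebas K k) z) 0 p.
Proof.
rewrite {1}(ebas_sum y) mmul_suml summxE; apply: eq_bigr => k _.
by rewrite mmulZl // mxE.
Qed.

Lemma pair_Lst x a w : pair (Lst mul x a) w = pair a (mul x w).
Proof.
rewrite {2}(ebas_sum w) mmul_sumr pair_sumr [LHS]/pair; apply: eq_bigr => j _.
by rewrite mxE mmulZr pairZr mulrC.
Qed.
Lemma pair_Rst x a w : pair (Rst mul x a) w = pair a (mul w x).
Proof.
rewrite {2}(ebas_sum w) mmul_suml pair_sumr [LHS]/pair; apply: eq_bigr => j _.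
by rewrite mxE mmulZl // pairZr mulrC.
Qed.
End S.

Section S.
Variables (K : fieldType) (n : nat) (mul : 'rV[K]_n -> 'rV[K]_n -> 'rV[K]_n).
Hypothesis hb : is_bilinear mul.

Lemma LstDr x a b : Lst mul x (a + b) = Lst mul x a + Lst mul x b.
Proof. by apply: pair_ext => w; rewrite pairDl !pair_Lst // pairDl. Qed.
Lemma RstDr x a b : Rst mul x (a + b) = Rst mul x a + Rst mul x b.
Proof. by apply: pair_ext => w; rewrite pairDl !pair_Rst // pairDl. Qed.
Lemma LstBl x y a : Lst mul (x - y) a = Lst mul x a - Lst mul y a.
Proof.
by apply: pair_ext => w; rewrite pairDl pairNl !pair_Lst // mmulBl // pairDr pairNr.
Qed.
Lemma RstBl x y a : Rst mul (x - y) a = Rst mul x a - Rst mul y a.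
Proof.
by apply: pair_ext => w; rewrite pairDl pairNl !pair_Rst // mmulBr // pairDr pairNr.
Qed.

Lemma rmapD (r : 'M[K]_n) a b : rmap r (a + b) = rmap r a + rmap r b.
Proof.
apply/rowP => i; rewrite !mxE -big_split; apply: eq_bigr => j _.
by rewrite mxE mulrDr.
Qed.
Lemma rmapN (r : 'M[K]_n) a : rmap r (- a) = - rmap r a.
Proof.
apply/rowP => i; rewrite !mxE -sumrN; apply: eq_bigr => j _.
by rewrite mxE mulrN.
Qed.
Lemma rmapB (r : 'M[K]_n) a b : rmap r (a - b) = rmap r a - rmap r b.
Proof. by rewrite rmapD rmapN. Qed.
Lemma rmapZ (r : 'M[K]_n) c a : rmap r (c *: a) = c *: rmap r a.
Proof.
apply/rowP => i; rewrite !mxE mulr_sumr; apply: eq_bigr => j _.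
by rewrite mxE mulrCA.
Qed.

Lemma pair_rmap_anti (r : 'M[K]_n) a b : antisym r ->
  pair b (rmap r a) + pair a (rmap r b) = 0.
Proof.
move=> ar; rewrite /pair.
have -> : \sum_(i < n) a 0 i * rmap r b 0 i =
   - \sum_(i < n) b 0 i * rmap r a 0 i.
  rewrite -sumrN.
  under eq_bigr => i _ do rewrite mxE mulr_sumr.
  under [in RHS]eq_bigr => i _ do rewrite mxE mulr_sumr -sumrN.
  rewrite exchange_big /=; apply: eq_bigr => j _; apply: eq_bigr => i _.
  have : (trmx r) i j = (- r) i j by rewrite ar.
  rewrite !mxE => ->.
  by rewrite mulNr mulrN opprK mulrCA [RHS]mulrCA [a 0 i * _]mulrC.
by rewrite subrr.
Qed.
End S.

Lemma swap4 (R : nmodType) (n : nat) (F : 'I_n -> 'I_n -> 'I_n -> 'I_n -> R) :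
  \sum_(i < n) \sum_(k < n) \sum_(j < n) \sum_(l < n) F i k j l =
  \sum_(j < n) \sum_(l < n) \sum_(i < n) \sum_(k < n) F i k j l.
Proof.
under eq_bigr => i _ do rewrite exchange_big.
rewrite exchange_big; apply: eq_bigr => j _.
under eq_bigr => i _ do rewrite exchange_big.
by rewrite exchange_big.
Qed.

Section S.
Variables (K : fieldType) (n : nat) (mul : 'rV[K]_n -> 'rV[K]_n -> 'rV[K]_n).
Hypothesis hb : is_bilinear mul.

Lemma mulE2 x y p : (mul x y) 0 p =
  \sum_(i < n) \sum_(k < n) x 0 i * y 0 k * (mul (ebas K i) (ebas K k)) 0 p.
Proof.
rewrite mmulEl //; apply: eq_bigr => i _; rewrite mmulEr // mulr_sumr.
by apply: eq_bigr => k _; rewrite mulrA.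
Qed.

Lemma key_lhs (r : 'M[K]_n) a b p :
  (mul (rmap r a) (rmap r b)) 0 p =
  \sum_(j < n) \sum_(l < n) a 0 j * b 0 l * r12r13 mul r p j l.
Proof.
rewrite mulE2.
under eq_bigr => i _ do under eq_bigr => k _ do
  rewrite !mxE big_distrl /= big_distrl /=.
under eq_bigr => i _ do under eq_bigr => k _ do under eq_bigr => j _ do
  rewrite big_distrr /= big_distrl /=.
rewrite swap4; apply: eq_bigr => j _; apply: eq_bigr => l _.
rewrite /r12r13 mulr_sumr; apply: eq_bigr => i _; rewrite mulr_sumr.
apply: eq_bigr => k _.
by rewrite [RHS]mulrA; congr (_ * _); rewrite mulrACA mulrC.
Qed.
End S.

Lemma rev3 (R : nmodType) (n : nat) (F : 'I_n -> 'I_n -> 'I_n -> R) :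
  \sum_(a < n) \sum_(b < n) \sum_(c < n) F a b c =
  \sum_(c < n) \sum_(b < n) \sum_(a < n) F a b c.
Proof.
under eq_bigr => a _ do rewrite exchange_big.
rewrite exchange_big; apply: eq_bigr => c _.
by rewrite exchange_big.
Qed.


Lemma g1 (K : fieldType) (rpx b ryj a M : K) :
  rpx * (b * (ryj * a * M)) = a * b * - (rpx * - ryj * M).
Proof. rewrite !(mulrN, mulNr, opprK) !mulrA; congr (_ * _).
by rewrite [LHS]mulrC !mulrA (mulrAC a rpx b). Qed.
Lemma g2 (K : fieldType) (rpy a rxl b M : K) :
  rpy * (a * (rxl * b * M)) = a * b * (rxl * rpy * M).
Proof. rewrite !mulrA; congr (_ * _).
by rewrite (mulrC rpy a) (mulrAC a rpy rxl) (mulrAC (a * rxl) rpy b) (mulrAC a rxl b). Qed.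

Section S.
Variables (K : fieldType) (n : nat) (mul : 'rV[K]_n -> 'rV[K]_n -> 'rV[K]_n).
Hypothesis hb : is_bilinear mul.

Lemma key_s1 (r : 'M[K]_n) a b p : antisym r ->
  \sum_(q < n) r p q * (Rst mul (rmap r a) b) 0 q =
  \sum_(j < n) \sum_(l < n) a 0 j * b 0 l * - r13r23 mul r p j l.
Proof.
move=> ar.
under eq_bigr => q _ do rewrite mxE /pair mulr_sumr.
under eq_bigr => q _ do under eq_bigr => s _ do
  rewrite mmulEr // mulr_sumr mulr_sumr.
under eq_bigr => q _ do under eq_bigr => s _ do under eq_bigr => k _ do
  rewrite mxE big_distrl big_distrr big_distrr /=.
under eq_bigr => q _ do rewrite exchange_big.
rewrite swap4 exchange_big; apply: eq_bigr => j _; apply: eq_bigr => l _.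
rewrite /r13r23 -sumrN mulr_sumr; apply: eq_bigr => x _.
rewrite -sumrN mulr_sumr; apply: eq_bigr => y _.
have : (trmx r) y j = (- r) y j by rewrite ar.
rewrite !mxE => ->.
exact: g1.
Qed.

Lemma key_s2 (r : 'M[K]_n) a b p :
  \sum_(q < n) r p q * (Lst mul (rmap r b) a) 0 q =
  \sum_(j < n) \sum_(l < n) a 0 j * b 0 l * r23r12 mul r p j l.
Proof.
under eq_bigr => q _ do rewrite mxE /pair mulr_sumr.
under eq_bigr => q _ do under eq_bigr => s _ do
  rewrite mmulEl // mulr_sumr mulr_sumr.
under eq_bigr => q _ do under eq_bigr => s _ do under eq_bigr => k _ do
  rewrite mxE big_distrl big_distrr big_distrr /=.
rewrite exchange_big; apply: eq_bigr => j _.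
rewrite rev3; apply: eq_bigr => l _.
rewrite /r23r12 mulr_sumr; apply: eq_bigr => x _.
rewrite mulr_sumr; apply: eq_bigr => y _.
exact: g2.
Qed.

Lemma rmapE (r : 'M[K]_n) c p : (rmap r c) 0 p = \sum_(q < n) r p q * c 0 q.
Proof. by rewrite /rmap mxE. Qed.

Lemma key (r : 'M[K]_n) a b : antisym r -> AYBE mul r ->
  mul (rmap r a) (rmap r b) =
  rmap r (Rst mul (rmap r a) b + Lst mul (rmap r b) a).
Proof.
move=> ar ay; apply/rowP => p; rewrite key_lhs // rmapE.
under [in RHS]eq_bigr => q _ do rewrite mxE mulrDr.
rewrite big_split /= key_s1 // key_s2 -big_split /=; apply: eq_bigr => j _.
rewrite -big_split /=; apply: eq_bigr => l _.
rewrite -mulrDr; congr (_ * _).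
have := ay p j l; move/eqP; rewrite subr_eq0 => /eqP <-.
by rewrite addrC addrK.
Qed.
End S.


Lemma zid (V : zmodType) (X P Q g d al be : V) :
 X - P - (Q - (g + d)) + ((P - (g + d)) - (al - g)) + ((Q - (g + d)) - (be - d))
 = X - (al + be).
Proof.
rewrite !opprB !opprD !addrA.
congr (_ - be). rewrite subrK.
rewrite (addrAC _ (- al) Q) (addrAC _ (- al) (- g)).
congr (_ - al).
rewrite (addrAC _ Q (- g)) addrK.
rewrite (addrAC _ (- d) Q) (addrAC _ (- g) Q) (addrAC _ P Q) subrK.
rewrite (addrAC _ d P) (addrAC _ g P) subrK.
by rewrite (addrAC _ d (- g)) !addrK.
Qed.

Lemma zid2 (V : zmodType) (A B G D : V) : A - G + (B - D) + (G + D) = A + B.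
Proof.
by rewrite addrACA !subrK.
Qed.

Section S.
Variables (K : fieldType) (n : nat) (mul : 'rV[K]_n -> 'rV[K]_n -> 'rV[K]_n).
Hypothesis hb : is_bilinear mul.
Hypothesis ha : is_assoc mul.

Lemma sd_assoc : ds_assoc (semidirect_mul mul).
Proof.
move=> [x a] [y b] [z c]; rewrite /semidirect_mul /=; congr (_, _); first exact: ha.
apply: pair_ext => w.
rewrite !(pairDl, pair_Rst, pair_Lst) //.
rewrite !ha addrA; congr (_ + _); rewrite addrC; congr (_ + _).
Qed.

Lemma sd_inv : ds_invariant (semidirect_mul mul).
Proof.
move=> [x a] [y b] [z c]; rewrite /Bform /semidirect_mul /=.
by rewrite !(pairDl, pair_Rst, pair_Lst) // addrA.
Qed.

Definition phi (r : 'M[K]_n) (u : DS K n) : DS K n := (u.1 - rmap r u.2, u.2).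
Definition psi (r : 'M[K]_n) (u : DS K n) : DS K n := (u.1 + rmap r u.2, u.2).

Lemma phiK r : cancel (phi r) (psi r).
Proof. by move=> [x a]; rewrite /phi /psi /= subrK. Qed.
Lemma psiK r : cancel (psi r) (phi r).
Proof. by move=> [x a]; rewrite /phi /psi /= addrK. Qed.

Lemma phi_lin r c u v : phi r (dsadd (dsscale c u) v) = dsadd (dsscale c (phi r u)) (phi r v).
Proof.
case: u v => [x a] [y b]; rewrite /phi /dsadd /dsscale /=; congr (_, _).
by rewrite rmapD rmapZ scalerBr opprD addrACA.
Qed.

Lemma phi_B r u v : antisym r -> Bform (phi r u) (phi r v) = Bform u v.
Proof.
move=> ar; case: u v => [x a] [y b]; rewrite /phi /Bform /=.
by rewrite !(pairDr, pairNr) addrACA -opprD pair_rmap_anti // subr0.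
Qed.

Lemma phi_hom r u v : antisym r -> AYBE mul r ->
  phi r (semidirect_mul mul u v) = Dr_mul mul r (phi r u) (phi r v).
Proof.
move=> ar ay; case: u v => [x a] [y b]; rewrite /phi /semidirect_mul /Dr_mul /=.
congr (_, _); last by rewrite (RstBl hb) (LstBl hb) zid2.
rewrite !(mmulBl hb, mmulBr hb, RstBl hb, LstBl hb) (key hb) // !(rmapB, rmapD, rmapN).
by rewrite zid.
Qed.
End S.

Theorem theorem2p4p9 (K : fieldType) (n : nat)
    (mul : 'rV[K]_n -> 'rV[K]_n -> 'rV[K]_n) (r : 'M[K]_n) :
  is_bilinear mul -> is_assoc mul ->
  antisym r -> AYBE mul r ->
  ds_assoc (Dr_mul mul r) /\
  ds_assoc (semidirect_mul mul) /\
  ds_invariant (Dr_mul mul r) /\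
  ds_invariant (semidirect_mul mul) /\
  exists phi : DS K n -> DS K n,
    [/\ forall (c : K) (u v : DS K n),
          phi (dsadd (dsscale c u) v) = dsadd (dsscale c (phi u)) (phi v),
        bijective phi,
        forall u v : DS K n,
          phi (semidirect_mul mul u v) = Dr_mul mul r (phi u) (phi v)
      & forall u v : DS K n, Bform (phi u) (phi v) = Bform u v].
Proof.
move=> hb ha ar ay.
have hom u v := @phi_hom _ _ _ hb r u v ar ay.
have Dr_eq : forall u v, Dr_mul mul r u v =
    phi r (semidirect_mul mul (psi r u) (psi r v)).
  by move=> u v; rewrite hom !psiK.
split.
  by move=> u v w; rewrite !Dr_eq !phiK sd_assoc.
split; first exact: sd_assoc.
split.
  have H : forall u v w, Bform (Dr_mul mul r (phi r u) (phi r v)) (phi r w) =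
      Bform (phi r u) (Dr_mul mul r (phi r v) (phi r w)).
    by move=> u v w; rewrite -!hom !phi_B // sd_inv.
  by move=> u v w; have := H (psi r u) (psi r v) (psi r w); rewrite !psiK.
split; first exact: sd_inv.
exists (phi r); split.
- exact: phi_lin.
- exact: (Bijective (phiK r) (psiK r)).
- exact: hom.
- by move=> u v; apply: phi_B.
Qed.
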